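(* Let $U\le\mathbb{F}_q^k$ be a subspace with $\dim U=k-\ell$, and let $\mathcal{P}=\{x+U:x\in\mathbb{F}_q^k\}$ be its coset partition. If $$\big|\{e_i+U:\ i\in[k],\ e_i\notin U\}\big|=\ell,$$ where $e_i$ is the $i$-th standard basis vector, then the partition graph $G_{\mathcal{P}}$ contains a clique of size $q^{\ell}$ (i.e., containing exactly one vector from each coset of $U$).
   Context: $d$ is Hamming distance; for distinct blocks $d(P,P')=\min_{u\in P,v\in P'}d(u,v)$. The partition graph $G_{\mathcal{P}}$ of a partition $\mathcal{P}$ of $\mathbb{F}_q^k$ has vertex set $\mathbb{F}_q^k$, and vertices $u\in P$, $v\in P'$ (blocks of $\mathcal{P}$) are adjacent iff $P\ne P'$ and $d(u,v)=d(P,P')$. *)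

(* Defs.v *)
From HB Require Import structures.
From mathcomp Require Import all_boot all_order all_algebra.
Set Implicit Arguments. Unset Strict Implicit. Unset Printing Implicit Defensive.
Import GRing.Theory.
Local Open Scope ring_scope.

Section Defs.
Variables (F : finFieldType) (k : nat).
Notation V := 'rV[F]_k.

Definition hamming (u v : V) : nat := #|[set i : 'I_k | u 0 i != v 0 i]|.

(* distance between two blocks: min over pairs (blocks are nonempty, and
   hamming distances are <= k, so the default k is harmless) *)
Definition block_dist (P P' : {set V}) : nat :=
  \big[minn/k]_(u in P) \big[minn/k]_(v in P') hamming u v.

Definition pgraph_adj (Pt : {set {set V}}) (u v : V) : bool :=
  (pblock Pt u != pblock Pt v) &&
  (hamming u v == block_dist (pblock Pt u) (pblock Pt v)).

Definition is_clique (Pt : {set {set V}}) (C : {set V}) : Prop :=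
  forall u v, u \in C -> v \in C -> u != v -> pgraph_adj Pt u v.

Definition coset (U : {vspace V}) (x : V) : {set V} :=
  [set y : V | (y - x) \in U].

Definition coset_partition (U : {vspace V}) : {set {set V}} :=
  [set coset U x | x in [set: V]].

Definition std_e (i : 'I_k) : V := delta_mx 0 i.
End Defs.
Arguments std_e {F k} i.

(* Main.v *)
Require Import Defs.
From HB Require Import structures.
From mathcomp Require Import all_boot all_order all_algebra.
From mathcomp Require Import finfield zify.
Local Open Scope ring_scope.
Set Implicit Arguments. Unset Strict Implicit. Unset Printing Implicit Defensive.
Import GRing.Theory.

Lemma bigmin_leq_seq (I : eqType) (r : seq I) (P : pred I) (G : I -> nat) (k0 : nat) j :
  j \in r -> P j -> (\big[minn/k0]_(i <- r | P i) G i <= G j)%N.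
Proof.
elim: r => // a r IH; rewrite inE big_cons => /orP[/eqP <- -> | Hj Pj].
  exact: geq_minl.
case: ifP => _; last exact: IH.
exact: (leq_trans (geq_minr _ _) (IH Hj Pj)).
Qed.

Lemma bigmin_leq (T : finType) (A : {set T}) (G : T -> nat) (k0 : nat) j :
  j \in A -> (\big[minn/k0]_(i in A) G i <= G j)%N.
Proof. by move=> Hj; apply: bigmin_leq_seq => //; rewrite mem_index_enum. Qed.

Section Aux.
Variables (F : finFieldType) (k l : nat) (U : {vspace 'rV[F]_k}).
Local Notation V := 'rV[F]_k.
Local Notation e := (@std_e F k).

Lemma coset_eqP (x y : V) : (coset U x = coset U y) <-> (x - y \in U).
Proof.
split=> [H | H].
  have : x \in coset U x by rewrite inE subrr mem0v.
  by rewrite H inE.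
apply/setP=> z; rewrite !inE; apply/idP/idP => Hz.
  have -> : z - y = (z - x) + (x - y) by rewrite addrA subrK.
  exact: memvD.
have -> : z - x = (z - y) - (x - y) by rewrite opprB addrA subrK.
exact: memvB.
Qed.

Lemma mem_coset (x : V) : x \in coset U x.
Proof. by rewrite inE subrr mem0v. Qed.

Lemma pblock_coset (x : V) : pblock (coset_partition U) x = coset U x.
Proof.
apply: def_pblock; last exact: mem_coset.
  apply/trivIsetP => A B /imsetP[a _ ->] /imsetP[b _ ->] Hab.
  rewrite -setI_eq0; apply/eqP/setP => z; rewrite !inE.
  apply/negbTE/andP => -[Ha Hb].
  move/negP: Hab; apply; apply/eqP/coset_eqP.
  have -> : a - b = (z - b) - (z - a) by rewrite opprB [RHS]addrC addrA subrK.
  exact: memvB.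
by apply: imset_f; rewrite inE.
Qed.

Definition R := [set i : 'I_k | e i \notin U].
Definition g (j : 'I_k) : 'I_k :=
  odflt j [pick i in R | coset U (e i) == coset U (e j)].
Definition S := [set i in R | g i == i].

Lemma gP j : j \in R -> (g j \in R) /\ coset U (e (g j)) = coset U (e j).
Proof.
move=> Hj; rewrite /g; case: pickP => [i | H] /=.
  by case/andP => ? /eqP.
by move: (H j); rewrite Hj eqxx.
Qed.

Lemma g_cos j j' : j \in R -> coset U (e j) = coset U (e j') -> g j = g j'.
Proof.
move=> Hj H; rewrite /g H; case: pickP => [// | N].
by move: (N j); rewrite Hj H eqxx.
Qed.

Lemma gS j : j \in R -> g j \in S.
Proof.
move=> Hj; have [H1 H2] := gP Hj.
by rewrite inE H1 /= (g_cos H1 H2).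
Qed.


Lemma gS_id m : m \in S -> g m = m.
Proof. by rewrite inE => /andP[_ /eqP]. Qed.

Lemma SR m : m \in S -> m \in R.
Proof. by rewrite inE => /andP[]. Qed.

Lemma cardS : #|[set coset U (e i) | i in R]| = #|S|.
Proof.
have -> : [set coset U (e i) | i in R] = [set coset U (e i) | i in S].
  apply/setP => x; apply/imsetP/imsetP => -[j Hj ->].
    have [_ H2] := gP Hj; exists (g j); first exact: gS.
    by rewrite H2.
  by exists j => //; apply: SR.
apply: card_in_imset => m m' Hm Hm' H.
by rewrite -(gS_id Hm) -(gS_id Hm') (g_cos (SR Hm) H).
Qed.

Definition X := [seq e i | i <- enum S].
Definition W := <<X>>%VS.

Lemma eW m : m \in S -> e m \in W.
Proof. by move=> Hm; apply: memv_span; apply: map_f; rewrite mem_enum. Qed.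

Lemma UWf : (U + W)%VS = fullv.
Proof.
apply/eqP; rewrite eqEsubv subvf /=; apply/subvP => v _.
rewrite (row_sum_delta v); apply: memv_suml => j _; apply: memvZ.
have -> : delta_mx 0 j = e j by [].
case: (boolP (j \in R)) => Hj.
  have [H1 H2] := gP Hj.
  have -> : e j = (e j - e (g j)) + e (g j) by rewrite subrK.
  apply: memv_add; last exact/eW/gS.
  by apply/coset_eqP; rewrite H2.
rewrite -[e j]addr0; apply: memv_add; last exact: mem0v.
by move: Hj; rewrite inE negbK.
Qed.

Hypothesis HdU : \dim U = (k - l)%N.
Hypothesis Hc : #|[set coset U (e i) | i in R]| = l.

Lemma lk : (l <= k)%N.
Proof. by rewrite -Hc cardS (leq_trans (max_card _)) // card_ord. Qed.

Lemma dimW_le : (\dim W <= l)%N.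
Proof. by rewrite -Hc cardS cardE (leq_trans (dim_span _)) // size_map. Qed.

Lemma capUW : (U :&: W)%VS = 0%VS /\ \dim W = l.
Proof.
have := dimv_sum_cap U W; rewrite UWf dimvf dim_matrix mul1r HdU.
have := dimW_le; have := lk => H1 H2 H3.
move: H1 H2 H3; set a := \dim (U :&: W); set b := \dim W => H1 H2 H3.
have H4 : a = 0%N by lia.
split; first by apply/eqP; rewrite -dimv_eq0; apply/eqP.
lia.
Qed.


Lemma eE (m j : 'I_k) : e m 0 j = (m == j)%:R.
Proof. by rewrite /std_e mxE eqxx eq_sym. Qed.

Lemma W_supp w : w \in W -> forall j, j \notin S -> w 0 j = 0.
Proof.
move=> Hw j Hj.
have Hw' : w \in <<in_tuple X>>%VS := Hw.
rewrite (coord_span Hw') summxE big1 // => i _.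
rewrite mxE.
have : (in_tuple X)`_i \in X by apply: mem_nth; exact: ltn_ord.
case/mapP => m Hm ->; rewrite eE.
have -> : (m == j) = false by apply/eqP => E; move: Hj; rewrite -E -mem_enum Hm.
by rewrite mulr0.
Qed.

Lemma W_sum w : w \in W -> w = \sum_(m in S) w 0 m *: e m.
Proof.
move=> Hw; rewrite {1}(row_sum_delta w) (bigID (mem S)) /=.
rewrite [X in _ + X]big1 ?addr0 // => j Hj.
by rewrite W_supp // scale0r.
Qed.

Lemma sumS_W (d : 'I_k -> F) : \sum_(m in S) d m *: e m \in W.
Proof. by apply: memv_suml => m Hm; apply: memvZ; apply: eW. Qed.

Lemma indep (d : 'I_k -> F) : \sum_(m in S) d m *: e m \in U ->
  forall m, m \in S -> d m = 0.
Proof.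
move=> HU m Hm.
have : \sum_(m in S) d m *: e m \in (U :&: W)%VS by rewrite memv_cap HU sumS_W.
rewrite (proj1 capUW) memv0 => /eqP H.
have := congr1 (fun v : 'rV[F]_k => v 0 m) H; rewrite /= summxE mxE (bigD1 m) //=.
rewrite big1 ?addr0.
  by rewrite mxE eE eqxx mulr1.
by move=> i /andP[_ Hi]; rewrite mxE eE (negbTE Hi) mulr0.
Qed.

Definition wt (y : 'rV[F]_k) := #|[set i | y 0 i != 0]|.

Lemma wt_le w x : w \in W -> x \in U -> (wt w <= wt (w + x))%N.
Proof.
move=> Hw Hx; set y := w + x.
pose c m := \sum_(j in R | g j == m) y 0 j.
have HA : y - \sum_(j in R) y 0 j *: e (g j) \in U.
  rewrite {1}(row_sum_delta y) (big_mkcond (mem R)) /= -sumrB.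
  apply: memv_suml => j _.
  have -> : delta_mx 0 j = e j by [].
  case: ifP => Hj.
    by rewrite -scalerBr; apply: memvZ; apply/coset_eqP; rewrite (proj2 (gP Hj)).
  by rewrite subr0; apply: memvZ; move: Hj; rewrite inE => /negbFE.
have HB : \sum_(j in R) y 0 j *: e (g j) = \sum_(m in S) c m *: e m.
  rewrite (partition_big g (mem S)) /=; last by move=> j Hj; apply: gS.
  apply: eq_bigr => m _; rewrite scaler_suml; apply: eq_bigr => j /andP[_ /eqP ->].
  by [].
have Hd : forall m, m \in S -> w 0 m - c m = 0.
  apply: (indep (d := fun m => w 0 m - c m)).
  have -> : \sum_(m in S) (w 0 m - c m) *: e m =
     (w - y) + (y - \sum_(j in R) y 0 j *: e (g j)).
    rewrite HB addrA subrK [in RHS](W_sum Hw) -sumrB.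
    by apply: eq_bigr => m _; rewrite scalerBl.
  apply: memvD => //; rewrite /y opprD addrA subrr add0r memvN //.
have Hsub : [set i | w 0 i != 0] \subset g @: [set i | y 0 i != 0].
  apply/subsetP => m; rewrite inE => Hm.
  have HmS : m \in S by apply: contraNT Hm => HS; rewrite W_supp.
  have Hcm : c m != 0 by move: (Hd m HmS) => /eqP; rewrite subr_eq0 => /eqP <-.
  have [j Hj Hyj] : exists2 j, (j \in R) && (g j == m) & y 0 j != 0.
    apply/exists_inP; apply: contraR Hcm => /exists_inPn H.
    by apply/eqP/big1 => j Hj; apply/eqP; rewrite -[_ == _]negbK H.
  case/andP: Hj => _ /eqP <-; apply: imset_f; by rewrite inE.
rewrite /wt (leq_trans (subset_leq_card Hsub)) //; exact: leq_imset_card.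
Qed.

End Aux.

Theorem lemma6 (F : finFieldType) (k l : nat) (U : {vspace 'rV[F]_k}) :
  \dim U = (k - l)%N ->
  #|[set coset U (std_e i) | i in [set i : 'I_k | (std_e i : 'rV[F]_k) \notin U]]| = l ->
  exists C : {set 'rV[F]_k},
    #|C| = (#|F| ^ l)%N /\ is_clique (coset_partition U) C.
Proof.
move=> HdU Hc.
have hw : forall a b : 'rV[F]_k, hamming a b = wt (a - b).
  move=> a b; rewrite /hamming /wt; apply: eq_card => i.
  by rewrite !inE !mxE subr_eq0.
have [HUW HdW] := capUW HdU Hc.
exists [set v | v \in W U].
split.
  by rewrite cardsE card_vspace HdW.
move=> u v; rewrite !inE => Hu Hv Huv.
rewrite /pgraph_adj !pblock_coset.
have HuvW : u - v \in W U by apply: memvB.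
apply/andP; split.
  apply/negP => /eqP /coset_eqP H.
  have : u - v \in (U :&: W U)%VS by rewrite memv_cap H HuvW.
  by rewrite HUW memv0 subr_eq0 (negbTE Huv).
rewrite eqn_leq; apply/andP; split; last first.
  rewrite /block_dist; apply: (leq_trans (bigmin_leq _ _ (mem_coset U u))).
  exact: (bigmin_leq _ _ (mem_coset U v)).
rewrite /block_dist.
apply: (big_ind (fun n => hamming u v <= n)%N).
- by rewrite /hamming (leq_trans (max_card _)) // card_ord.
- by move=> x y Hx Hy; rewrite leq_min Hx Hy.
move=> u' Hu'.
apply: (big_ind (fun n => hamming u v <= n)%N).
- by rewrite /hamming (leq_trans (max_card _)) // card_ord.
- by move=> x y Hx Hy; rewrite leq_min Hx Hy.
move=> v' Hv'.
move: Hu' Hv'; rewrite !inE => Ha Hb.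
have Eu : u' = u + (u' - u) by rewrite addrC subrK.
have Ev : v' = v + (v' - v) by rewrite addrC subrK.
rewrite !hw Eu Ev opprD addrACA.
by apply: (wt_le HdU Hc) => //; apply: memvB.
Qed.
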